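(* Under the standing assumptions (H), for every fixed $\delta>0$, with $z(x)=\frac1a(\sqrt{2ax}+\delta\sqrt x)$, \[ \mathbf{P}\Big(A_\tau>x,\ \overline X_\tau\in\Big[y(x),\sqrt{2ax}-\tfrac{h(x)}{\log x}\Big],\ J_{\ge2},\ \tau\le z(x)\Big)=o\big(\overline F(\sqrt{2ax})\big),\qquad x\to\infty. \]
   Context: Standing assumptions (H): $X_1,X_2,\dots$ i.i.d. with $\mathbf{E}X_1=-a<0$, $\mathrm{Var}(X_1)<\infty$, $\overline F(x)=\mathbf{P}(X_1>x)\sim e^{-g(x)}x^{-2}$ as $x\to\infty$, where $g:(0,\infty)\to\mathbb{R}$ is continuously differentiable, nondecreasing for all large $x$, $x\mapsto g(x)/x^{\gamma_0}$ is nonincreasing on $(0,\infty)$ with limit $0$ for some $\gamma_0\in(0,1/2)$, and $xg'(x)\to\infty$. Notation: $S_0=0$, $S_n=X_1+\dots+X_n$, $\tau=\min\{n\ge1:S_n\le0\}$, $A_\tau=\sum_{k=0}^{\tau-1}S_k$, $\overline X_\tau=\max(X_1,\dots,X_\tau)$, $h(x)=\sqrt{2ax}/g(\sqrt{2ax})$, $y(x)=\sqrt{2ax}-C_0h(x)\log x$ for a fixed constant $C_0>\frac{5/4}{1-\gamma_0}$. $J_{\ge2}$ is the event that there exist two distinct indices $k,l\in\{1,\dots,\tau\}$ with $X_k>y(x)$ and $X_l>y(x)$. *)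

(* Defs.v *)
From HB Require Import structures.
From mathcomp Require Import all_boot all_order all_algebra.
From mathcomp Require Import all_classical all_reals all_analysis.
Set Implicit Arguments. Unset Strict Implicit. Unset Printing Implicit Defensive.
Import Order.TTheory GRing.Theory Num.Theory.
Import numFieldNormedType.Exports.
Local Open Scope classical_set_scope.
Local Open Scope ring_scope.

Section RW.
Context {d : measure_display} {T : measurableType d} {R : realType}
  (P : probability T R).

Definition mutually_independent (X : nat -> {RV P >-> R}) : Prop :=
  forall (I : seq nat) (B : nat -> set R),
    uniq I -> (forall i, measurable (B i)) ->
    P (\bigcap_(i in [set` I]) (X i @^-1` B i)) =
    (\prod_(i <- I) P (X i @^-1` B i))%E.

Definition identically_distributed (X : nat -> {RV P >-> R}) : Prop :=
  forall n (B : set R), measurable B -> P (X n @^-1` B) = P (X 0%N @^-1` B).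

(* Indexing shift: X k here is X_{k+1} of the paper. *)
Definition Ssum (X : nat -> {RV P >-> R}) (n : nat) (t : T) : R :=
  \sum_(k < n) X k t.

Definition Asum (X : nat -> {RV P >-> R}) (n : nat) (t : T) : R :=
  \sum_(k < n) Ssum X k t.

(* max(X_1, ..., X_n) (meaningful for n >= 1) *)
Definition Xmax (X : nat -> {RV P >-> R}) (n : nat) (t : T) : R :=
  \big[Num.max/X 0%N t]_(k < n) X k t.

Definition is_tau (X : nat -> {RV P >-> R}) (t : T) (n : nat) : Prop :=
  [/\ (1 <= n)%N, Ssum X n t <= 0 &
      forall m, (1 <= m)%N -> (m < n)%N -> 0 < Ssum X m t].

Definition Fbar (X : nat -> {RV P >-> R}) (x : R) : R :=
  fine (P [set t | x < X 0%N t]).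

End RW.

Definition hfun {R : realType} (a : R) (g : R -> R) (x : R) : R :=
  Num.sqrt (2 * a * x) / g (Num.sqrt (2 * a * x)).

Definition yfun {R : realType} (a C0 : R) (g : R -> R) (x : R) : R :=
  Num.sqrt (2 * a * x) - C0 * hfun a g x * ln x.

Definition zfun {R : realType} (a delta : R) (x : R) : R :=
  (Num.sqrt (2 * a * x) + delta * Num.sqrt x) / a.

Definition event_main {d : measure_display} {T : measurableType d}
  {R : realType} (P : probability T R) (X : nat -> {RV P >-> R})
  (a C0 delta : R) (g : R -> R) (x : R) : set T :=
  [set t | exists n : nat,
     [/\ is_tau X t n,
         x < Asum X n t,
         yfun a C0 g x <= Xmax X n t /\
           Xmax X n t <= Num.sqrt (2 * a * x) - hfun a g x / ln x,
         (exists k l : nat, [/\ k != l, (k < n)%N, (l < n)%N,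
             yfun a C0 g x < X k t & yfun a C0 g x < X l t]) &
         n%:R <= zfun a delta x]].

(* Main.v *)
Require Import Defs.
From HB Require Import structures.
From mathcomp Require Import all_boot all_order all_algebra.
From mathcomp Require Import all_classical all_reals all_analysis.
From mathcomp Require Import lra ring measurable_realfun.
Import Order.TTheory GRing.Theory Num.Theory.
Import numFieldNormedType.Exports.
Local Open Scope classical_set_scope.
Local Open Scope ring_scope.

Lemma near_ex {R : realType} (P : R -> Prop) :
  (\forall x \near +oo%R, P x) -> exists M : R, forall x, M < x -> P x.
Proof. by move=> [M [_ H]]; exists M. Qed.

Lemma ratio_bounds {R : realType} (F E0 : R -> R) :
  (F x / E0 x) @[x --> +oo%R] --> (1 : R) -> (forall x, 0 < x -> 0 < E0 x) ->
  exists T1, 0 < T1 /\ forall t, T1 < t -> E0 t / 2 <= F t /\ F t <= 2 * E0 t.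
Proof.
move=> hl hE.
have /near_ex [M HM] : \forall t \near +oo%R, `|1 - F t / E0 t| < 1 / 2.
  by move/cvgrPdist_lt : hl; apply; lra.
exists (Num.max M 1); split; first by rewrite lt_max ltr01 orbT.
move=> t; rewrite gt_max => /andP[tM t1].
have e0 : 0 < E0 t by apply: hE; lra.
have := HM t tM; rewrite ltr_norml => /andP[h1 h2].
have Fq : F t = (F t / E0 t) * E0 t by rewrite mulfVK ?gt_eqF.
set q := F t / E0 t in h1 h2 Fq.
rewrite Fq; split; nra.
Qed.

Lemma growth {R : realType} (g : R -> R) (K : R) :
  (forall x : R, 0 < x -> derivable g x 1) ->
  (x * derive1 g x) @[x --> +oo%R] --> +oo%R -> 0 < K ->
  exists M : R, forall t, M < t -> K * ln t <= g t.
Proof.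
move=> hd hl K0.
have /near_ex [M1 HM1] : \forall x \near +oo%R, 2 * K <= x * derive1 g x.
  by move/cvgryPge : hl; apply.
set t0 := Num.max M1 1 + 1.
have t0M1 : M1 < t0 by rewrite /t0 ltr_pwDr // le_max lexx.
have t01 : 1 < t0 by rewrite /t0 ltr_pwDr // le_max lexx orbT.
have t00 : 0 < t0 by rewrite (lt_trans ltr01).
set phi := fun u => g u - (2 * K) * ln u.
have phid : forall u : R, 0 < u -> derivable phi u 1 /\ derive1 phi u = derive1 g u - (2 * K) * u^-1.
  move=> u u0; have dl : derivable (@ln R) u 1 by apply: ex_derive; exact: is_derive1_ln.
  have dK : derivable (fun u => (2 * K) * ln u) u 1.
    by apply: derivableZ.
  split; first exact: derivableB (hd _ u0) dK.
  rewrite derive1E /phi deriveB //; last exact: hd.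
  rewrite deriveZ // -derive1E -derive1E.
  have Hd := is_derive1_ln u0.
  by rewrite (derive1E (@ln R)) derive_val.
have mono : forall t, t0 <= t -> phi t0 <= phi t.
  move=> t tt0; apply: (@ger0_derive1_ndecr _ phi t0 t) => //.
  - move=> u; rewrite in_itv /= => /andP[u1 _].
    exact: (phid _ (lt_trans t00 u1)).1.
  - move=> u; rewrite in_itv /= => /andP[u1 _].
    have u0 : 0 < u by exact: lt_trans t00 u1.
    rewrite (phid _ u0).2 subr_ge0.
    have := HM1 u (lt_trans t0M1 u1).
    by rewrite -(ler_pM2l u0) mulrCA mulfV ?gt_eqF // mulr1.
  - apply: derivable_within_continuous => u; rewrite in_itv /= => /andP[u1 _].
    exact: (phid _ (lt_le_trans t00 u1)).1.
set c := (2 * K * ln t0 - g t0) / K.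
exists (Num.max t0 (expR c)) => t; rewrite gt_max => /andP[tt0 tc].
have t0' : 0 < t by exact: lt_trans t00 tt0.
have := mono t (ltW tt0); rewrite /phi => H.
have lc : c <= ln t by rewrite -(expRK c) ler_ln ?posrE ?expR_gt0 // ltW.
have : K * c <= K * ln t by rewrite ler_pM2l.
rewrite /c mulrCA mulfV ?gt_eqF // mulr1.
lra.
Qed.

Lemma gy_bound {R : realType} (g : R -> R) (gam s y : R) :
  (forall x y : R, 0 < x -> x <= y -> g y / y `^ gam <= g x / x `^ gam) ->
  0 < y -> y <= s -> 0 < gam -> gam <= 1 -> 0 <= g s ->
  g s * (y / s) <= g y.
Proof.
move=> hm y0 ys g0 g1 gs0.
have s0 : 0 < s by exact: lt_le_trans ys.
have H := hm y s y0 ys.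
have py : y `^ gam = expR (gam * ln y) by rewrite /powR gt_eqF.
have ps : s `^ gam = expR (gam * ln s) by rewrite /powR gt_eqF.
have pyl : 0 < y `^ gam by exact: powR_gt0.
have psl : 0 < s `^ gam by exact: powR_gt0.
have lys : ln y <= ln s by rewrite ler_ln ?posrE.
have key : y / s <= y `^ gam / s `^ gam.
  rewrite py ps -expRN -expRD -[y]lnK ?posrE // -[s]lnK ?posrE // -expRN -expRD !lnK ?posrE //.
  rewrite ler_expR.
  have : 0 <= (1 - gam) * (ln s - ln y) by apply: mulr_ge0; lra.
  lra.
apply: le_trans (ler_wpM2l gs0 key) _.
rewrite (_ : g s * _ = y `^ gam * (g s / s `^ gam)); last by ring.
apply: le_trans (ler_wpM2l (ltW pyl) H) _.
by rewrite mulrCA mulfV ?gt_eqF // mulr1.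
Qed.

Lemma final_alg {R : realType} (p MM Fy Fs c1 s u v w W k eps : R) :
  0 <= p -> p <= MM * Fy ^+ 2 -> 0 <= MM -> MM <= (c1 * s) ^+ 2 ->
  0 <= Fy -> Fy <= 2 * w * u ^+ 2 -> 0 < s -> s * v = 1 -> 0 <= u -> u <= 2 * v ->
  0 <= w -> w ^+ 2 <= k * W -> 0 <= W -> 0 < k -> W * v ^+ 2 / 2 <= Fs ->
  64 * c1 ^+ 2 * k = eps / 2 -> 0 < eps -> p <= eps * Fs.
Proof.
move=> p0 pM M0 Mz F0 Fu s0 sv u0 uv w0 wk W0 k0 FW ck e0.
have v0 : 0 < v by nra.
have h1 : p <= (c1 * s) ^+ 2 * Fy ^+ 2.
  apply: le_trans pM _; apply: ler_wpM2r => //; exact: sqr_ge0.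
have h2 : Fy ^+ 2 <= (2 * w * u ^+ 2) ^+ 2.
  by rewrite ler_sqr ?nnegrE //; nra.
have h3 : u ^+ 2 <= (2 * v) ^+ 2 by rewrite ler_sqr ?nnegrE //; nra.
have h4 : (2 * w * u ^+ 2) ^+ 2 <= 64 * w ^+ 2 * v ^+ 4.
  have : (u ^+ 2) ^+ 2 <= ((2 * v) ^+ 2) ^+ 2 by rewrite ler_sqr ?nnegrE //; nra.
  have := sqr_ge0 w.
  move=> hw hu.
  rewrite (_ : (2 * w * u ^+ 2) ^+ 2 = 4 * w ^+ 2 * (u ^+ 2) ^+ 2); last by ring.
  rewrite (_ : 64 * w ^+ 2 * v ^+ 4 = 4 * w ^+ 2 * ((2 * v) ^+ 2) ^+ 2); last by ring.
  by apply: ler_wpM2l => //; nra.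
have h5 : 64 * w ^+ 2 * v ^+ 4 <= 64 * (k * W) * v ^+ 4.
  apply: ler_wpM2r; first by apply: exprn_ge0; exact: ltW.
  by apply: ler_wpM2l.
have h6 : (c1 * s) ^+ 2 * (64 * (k * W) * v ^+ 4) = eps / 2 * W * v ^+ 2.
  rewrite -ck (_ : (c1 * s) ^+ 2 * (64 * (k * W) * v ^+ 4) = 64 * c1 ^+ 2 * k * W * v ^+ 2 * (s * v) ^+ 2); last by ring.
  by rewrite sv expr1n mulr1.
have cs0 : 0 <= (c1 * s) ^+ 2 by exact: sqr_ge0.
have : p <= eps / 2 * W * v ^+ 2.
  rewrite -h6; apply: le_trans h1 _; apply: ler_wpM2l => //.
  by apply: le_trans h2 (le_trans h4 h5).
have : eps / 2 * W * v ^+ 2 <= eps * Fs.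
  rewrite (_ : eps / 2 * W * v ^+ 2 = eps * (W * v ^+ 2 / 2)); last by ring.
  by apply: ler_wpM2l => //; exact: ltW.
lra.
Qed.

Section M.
Context (d : measure_display) (T : measurableType d) (R : realType) (P : probability T R)
  (X : nat -> {RV P >-> R}).

Lemma mX k : measurable_fun setT (X k).
Proof. by []. Qed.

Lemma mlt (f g : T -> R) : measurable_fun setT f -> measurable_fun setT g ->
  measurable [set t | f t < g t].
Proof.
move=> mf mg; rewrite -[X in measurable X]setTI.
exact: (measurable_fun_ltr mf mg measurableT (Y := [set true])).
Qed.

Lemma mle (f g : T -> R) : measurable_fun setT f -> measurable_fun setT g ->
  measurable [set t | f t <= g t].
Proof.
move=> mf mg; rewrite -[X in measurable X]setTI.
exact: (measurable_fun_ler mf mg measurableT (Y := [set true])).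
Qed.

Lemma mimp (C : Prop) (S : set T) : measurable S -> measurable [set t | C -> S t].
Proof.
move=> mS; case: (pselect C) => c.
  by rewrite (_ : [set t | C -> S t] = S) //; apply/seteqP; split => t /=; auto.
by rewrite (_ : [set t | C -> S t] = setT) //; apply/seteqP; split => t /=; tauto.
Qed.

Lemma mand (C : Prop) (S : set T) : measurable S -> measurable [set t | C /\ S t].
Proof.
move=> mS; case: (pselect C) => c.
  by rewrite (_ : [set t | C /\ S t] = S) //; apply/seteqP; split => t /=; tauto.
by rewrite (_ : [set t | C /\ S t] = set0) //; apply/seteqP; split => t /=; tauto.
Qed.

Lemma mconst (C : Prop) : measurable (fun _ : T => C).
Proof.
case: (pselect C) => c.
  by rewrite (_ : (fun _ => C) = setT) //; apply/seteqP; split => t /=.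
by rewrite (_ : (fun _ => C) = set0) //; apply/seteqP; split => t /=.
Qed.

Lemma mSsum n : measurable_fun setT (Ssum X n).
Proof. exact: measurable_sum. Qed.

Lemma mAsum n : measurable_fun setT (Asum X n).
Proof. by apply: measurable_sum => i; exact: mSsum. Qed.

Lemma mXmax n : measurable_fun setT (Xmax X n).
Proof.
rewrite /Xmax; elim: (index_enum _) => [|i r IH].
  by rewrite (_ : (fun t => _) = X 0%N) //; apply/funext => t; rewrite big_nil.
rewrite (_ : (fun t => _) = (X i) \max (fun t => \big[Num.max/X 0%N t]_(j <- r) X j t)).
  exact: measurable_maxr.
by apply/funext => t; rewrite big_cons.
Qed.

Lemma mevent a C0 delta g x : measurable (event_main X a C0 delta g x).
Proof.
set yv := yfun a C0 g x; set c := Num.sqrt (2 * a * x) - hfun a g x / ln x.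
set z := zfun a delta x.
have -> : event_main X a C0 delta g x = \bigcup_n (
  [set t | (1 <= n)%N /\ Ssum X n t <= 0] `&`
  \bigcap_m [set t | (1 <= m)%N -> (m < n)%N -> 0 < Ssum X m t] `&`
  [set t | x < Asum X n t] `&` [set t | yv <= Xmax X n t] `&`
  [set t | Xmax X n t <= c] `&`
  (\bigcup_k \bigcup_l [set t | (k != l /\ (k < n)%N /\ (l < n)%N) /\
       (yv < X k t /\ yv < X l t)]) `&`
  [set t | n%:R <= z /\ True]).
  apply/seteqP; split => t /=.
    move=> [n [[n1 Sn Sm] Ax [Y1 Y2] [k [l [kl kn ln yk yl]]] nz]].
    exists n => //; split; last by [].
    split; last by exists k => //; exists l.
    split => //; split => //; split => //; split => //.
    by move=> m _ m1 mn; apply: Sm.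
  move=> [n _ [[[[[[[n1 Sn] Sm] Ax] Y1] Y2] [k _ [l _ [[kl [kn ln]] [yk yl]]]]] [nz _]]].
  exists n; split => //.
    by split => // m m1 mn; apply: (Sm m I).
  by exists k, l.
apply: bigcupT_measurable => n.
repeat apply: measurableI; try exact: mconst.

- by apply: mle; [exact: mSsum|exact: measurable_cst].
- by apply: bigcapT_measurable => m; apply: (mimp _ [set t | (m < n)%N -> 0 < Ssum X m t]);
    apply: (mimp _ [set t | 0 < Ssum X m t]); apply: mlt;
    [exact: measurable_cst|exact: mSsum].
- by apply: mlt; [exact: measurable_cst|exact: mAsum].
- by apply: mle; [exact: measurable_cst|exact: mXmax].
- by apply: mle; [exact: mXmax|exact: measurable_cst].
- apply: bigcupT_measurable => k; apply: bigcupT_measurable => l.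
  repeat apply: measurableI; try exact: mconst.
  + by apply: (mlt (cst yv) (X k)) => //; exact: measurable_cst.
  + by apply: (mlt (cst yv) (X l)) => //; exact: measurable_cst.
Qed.

Lemma pair_bound (M : nat) (y : R) (E : set T) :
  mutually_independent X -> identically_distributed X ->
  measurable E ->
  (forall t, E t -> exists k l, [/\ k != l, (k < M)%N, (l < M)%N, y < X k t & y < X l t]) ->
  (P E <= ((M * M)%:R * Fbar X y ^+ 2)%:E)%E.
Proof.
move=> hind hid mE hE.
pose A k := [set t | y < X k t].
have mS : measurable [set u : R | y < u].
  rewrite (_ : [set u : R | y < u] = `]y, +oo[%classic); first exact: measurable_itv.
  by apply/seteqP; split => u /=; rewrite in_itv /= andbT.
have mA k : measurable (A k).
  by apply: (mlt (cst y) (X k)) => //; exact: measurable_cst.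
have PA k : P (A k) = (Fbar X y)%:E.
  have H := hid k _ mS.
  rewrite /Fbar fineK ?fin_num_measure //.
  exact: (mA 0%N).
have PAA k l : k != l -> P (A k `&` A l) = ((Fbar X y) ^+ 2)%:E.
  move=> kl.
  have := hind [:: k; l] (fun _ => [set u : R | y < u]) _ (fun _ => mS).
  rewrite /= inE andbT kl => /(_ isT).
  rewrite big_cons big_cons big_nil => H.
  have -> : A k `&` A l = \bigcap_(i in [set` [:: k; l]]) (X i @^-1` [set u : R | y < u]).
    apply/seteqP; split => t /=.
      move=> [Ak Al] i; rewrite /= !inE => /orP[/eqP ->|/eqP ->] //.
    move=> H'; split.
      by apply: H'; rewrite /= !inE eqxx.
    by apply: H'; rewrite /= !inE eqxx orbT.
  by rewrite H (PA k) (PA l) mule1 -EFinM expr2.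
pose C k := fun l : nat => if k != l then A k `&` A l else set0.
have mC k l : measurable (C k l).
  by rewrite /C; case: ifP => _ //; exact: measurableI.
pose B k := \big[setU/set0]_(l < M) C k l.
have mB k : measurable (B k).
  by rewrite /B -bigcup_mkord; apply: fin_bigcup_measurable => //.
have PC k l : (P (C k l) <= ((Fbar X y) ^+ 2)%:E)%E.
  rewrite /C; case: ifP => kl; first by rewrite PAA.
  by rewrite measure0 lee_fin sqr_ge0.
have PB k : (P (B k) <= (M%:R * (Fbar X y) ^+ 2)%:E)%E.
  rewrite /B; apply: le_trans; first exact: (@Boole_inequality _ _ _ P (C k) M (fun i _ => mC k i)).
  apply: le_trans; first by apply: (lee_sum (g := fun _ => (Fbar X y ^+ 2)%:E)) => i _; exact: PC.
  by rewrite (eq_bigr (fun=> (Fbar X y ^+ 2)%:E)) // sumEFin sumr_const card_ord lee_fin mulr_natl.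
have sub : E `<=` \big[setU/set0]_(k < M) B k.
  move=> t /hE [k [l [kl kM lM yk yl]]].
  rewrite -bigcup_mkord; exists k => //.
  rewrite /B -bigcup_mkord; exists l => //.
  by rewrite /C kl; split.
apply: le_trans (le_measure _ _ _ sub) _; rewrite ?inE //.
  by rewrite -bigcup_mkord; apply: fin_bigcup_measurable => //.
apply: le_trans; first exact: (@Boole_inequality _ _ _ P B M (fun i _ => mB i)).
apply: le_trans; first by apply: (lee_sum (g := fun _ => (M%:R * Fbar X y ^+ 2)%:E)) => i _; exact: PB.
by rewrite (eq_bigr (fun=> (M%:R * Fbar X y ^+ 2)%:E)) // sumEFin sumr_const card_ord lee_fin natrM -mulrA !mulr_natl.
Qed.

End M.

Theorem mainTheorem11 (d : measure_display) (T : measurableType d)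
  (R : realType) (P : probability T R) (X : nat -> {RV P >-> R})
  (a : R) (g : R -> R) (gamma0 C0 delta : R) :
  (* i.i.d. *)
  mutually_independent X -> identically_distributed X ->
  (* E X_1 = -a < 0, Var X_1 < oo *)
  0 < a ->
  P.-integrable setT (EFin \o X 0%N) ->
  ('E_P[X 0%N] = (- a)%:E)%E ->
  P.-integrable setT (EFin \o (fun t => X 0%N t ^+ 2)) ->
  (* Fbar(x) ~ e^{-g(x)} x^{-2} *)
  (Fbar X x / (expR (- g x) * x ^-2)) @[x --> +oo%R] --> (1 : R) ->
  (* g continuously differentiable on (0, oo) *)
  (forall x : R, 0 < x -> derivable g x 1) ->
  (forall x : R, 0 < x -> (derive1 g y) @[y --> x] --> derive1 g x) ->
  (* g nondecreasing for all large x *)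
  (exists x0 : R, forall x y : R, x0 <= x -> x <= y -> g x <= g y) ->
  (* g(x)/x^gamma0 nonincreasing on (0,oo) with limit 0, gamma0 in (0,1/2) *)
  0 < gamma0 -> gamma0 < 1 / 2 ->
  (forall x y : R, 0 < x -> x <= y -> g y / y `^ gamma0 <= g x / x `^ gamma0) ->
  (g x / x `^ gamma0) @[x --> +oo%R] --> (0 : R) ->
  (* x g'(x) -> oo *)
  (x * derive1 g x) @[x --> +oo%R] --> +oo%R ->
  (* the constant C0 *)
  (5 / 4) / (1 - gamma0) < C0 ->
  0 < delta ->
  (* P(...) = o(Fbar(sqrt(2ax))) as x -> oo  (unfolded little-o) *)
  forall eps : R, 0 < eps ->
    \forall x \near +oo%R,
      `| fine (P (event_main X a C0 delta g x)) |
        <= eps * `| Fbar X (Num.sqrt (2 * a * x)) |.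
Proof.
move=> hind hid a0 _ _ _ hF hd _ _ g0 g12 hmono _ hxg hC0 d0 eps e0.
have C00 : 0 < C0.
  apply: lt_trans hC0; apply: divr_gt0; lra.
have g1 : gamma0 <= 1 by lra.
pose E0 := fun t : R => expR (- g t) * (t ^+ 2)^-1.
have E0p : forall t, 0 < t -> 0 < E0 t.
  by move=> t t0; apply: mulr_gt0; [exact: expR_gt0|rewrite invr_gt0; exact: exprn_gt0].
have [T1 [T10 HT1]] := @ratio_bounds _ (Fbar X) E0 hF E0p.
have K0 : 0 < 4 * C0 + 1 by lra.
have [T2 HT2] := @growth _ g (4 * C0 + 1) hd hxg K0.
pose q := Num.sqrt (2 * a).
have q0 : 0 < q by rewrite sqrtr_gt0; lra.
pose c1 := (1 + delta / q) / a.
have c10 : 0 < c1 by apply: divr_gt0 => //; apply: ltr_wpDr; [exact: ltW (divr_gt0 d0 q0)|lra].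
pose k := eps / (128 * c1 ^+ 2).
have k0 : 0 < k by apply: divr_gt0 => //; apply: mulr_gt0; [lra|exact: exprn_gt0].
pose L := ln k.
pose Lb := `|2 * C0 * ln (2 * a)| + `|L| + 1.
pose S0 := Num.max (Num.max (2 * T1) T2) (Num.max (expR Lb) 1).
have S01 : 1 <= S0 by rewrite /S0 !le_max lexx !orbT.
exists (Num.max 1 (S0 ^+ 2 / (2 * a))); split; first exact: num_real.
move=> x; rewrite gt_max => /andP[x1 xS].
have x0 : 0 < x by lra.
set s := Num.sqrt (2 * a * x).
have s0 : 0 < s by rewrite sqrtr_gt0; apply: mulr_gt0 => //; lra.
have ss : s ^+ 2 = 2 * a * x by rewrite sqr_sqrtr //; apply: mulr_ge0 => //; lra.
have sS : S0 < s.
  have : S0 ^+ 2 < 2 * a * x.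
    by move: xS; rewrite ltr_pdivrMr ?mulr_gt0 //; lra.
  rewrite -ss => h; rewrite ltNge; apply/negP => hs.
  have : s ^+ 2 <= S0 ^+ 2 by rewrite ler_sqr ?nnegrE //; lra.
  lra.
have sT1 : 2 * T1 < s by apply: le_lt_trans sS; rewrite /S0 !le_max lexx.
have sT2 : T2 < s by apply: le_lt_trans sS; rewrite /S0 !le_max lexx !orbT.
have sLb : expR Lb < s by apply: le_lt_trans sS; rewrite /S0 !le_max lexx !orbT.
have ls : Lb <= ln s.
  by rewrite -(expRK Lb) ler_ln ?posrE ?expR_gt0 // ltW.
have lx : ln x = 2 * ln s - ln (2 * a).
  have : ln (s ^+ 2) = ln (2 * a) + ln x by rewrite ss lnM ?posrE //; lra.
  by rewrite lnXn // mulr2n; lra.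
have lx0 : 0 <= ln x by apply: ln_ge0; lra.
have gsK := HT2 s sT2.
have nL1 : - (2 * C0 * ln (2 * a)) <= `|2 * C0 * ln (2 * a)|.
  by rewrite -normrN ler_norm.
have nL2 : - L <= `|L| by rewrite -normrN ler_norm.
have nL3 : 0 <= `|L| by [].
have nL4 : 0 <= `|2 * C0 * ln (2 * a)| by [].
have gs0 : 0 < g s.
  apply: lt_le_trans gsK; apply: mulr_gt0; first lra.
  rewrite /Lb in ls; lra.
have gs2 : 2 * C0 * ln x <= g s.
  rewrite lx; rewrite /Lb in ls.
  have : 4 * C0 * ln s + ln s <= g s by lra.
  lra.
pose r := C0 * ln x / g s.
have r0 : 0 <= r by apply: divr_ge0; [apply: mulr_ge0; lra|lra].
have r1 : r <= 1 / 2.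
  by rewrite /r ler_pdivrMr //; lra.
have yE : yfun a C0 g x = s - s * r.
  by rewrite /yfun /hfun -/s /r; field; apply: lt0r_neq0.
pose y := yfun a C0 g x.
have ys : y <= s by rewrite /y yE; nra.
have ys2 : s / 2 <= y by rewrite /y yE; nra.
have y0 : 0 < y by lra.
have gy : g s - C0 * ln x <= g y.
  have := @gy_bound _ g gamma0 s y hmono y0 ys g0 g1 (ltW gs0).
  rewrite /y yE (_ : (s - s * r) / s = 1 - r); last by field; apply: lt0r_neq0.
  rewrite /r mulrBr mulr1 mulrCA mulfV ?gt_eqF // mulr1.
  by [].
have hA : C0 * ln x = 2 * (C0 * ln s) - C0 * ln (2 * a) by rewrite lx; ring.
have key : - 2 * g y + g s <= L.
  rewrite /Lb in ls; lra.
pose w := expR (- g y).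
pose W := expR (- g s).
have wk : w ^+ 2 <= k * W.
  rewrite /w /W expr2 -expRD.
  rewrite (_ : - g y + - g y = (- 2 * g y + g s) + - g s); last by ring.
  rewrite expRD; apply: ler_wpM2r; first exact: ltW (expR_gt0 _).
  by rewrite -(lnK (k0 : k \in Num.pos)) ler_expR.
pose z := zfun a delta x.
have zE : z = c1 * s.
  have : s = q * Num.sqrt x by rewrite /s /q sqrtrM //; lra.
  rewrite /z /zfun /c1 -/s => ->.
  by field; rewrite !gt_eqF.
have z0 : 0 <= z by rewrite zE; apply: mulr_ge0; lra.
pose M' := Num.truncn z.
have hE : forall t, event_main X a C0 delta g x t ->
    exists k l, [/\ k != l, (k < M')%N, (l < M')%N, y < X k t & y < X l t].
  move=> t [n [_ _ _ [kk [ll [kl kn ln yk yl]]] nz]].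
  have nM : (n <= M')%N by rewrite /M' truncn_ge_nat.
  exists kk, ll; split => //; exact: leq_trans nM.
have hP := @pair_bound _ _ _ P X M' y _ hind hid (@mevent _ _ _ P X a C0 delta g x) hE.
set p := fine (P (event_main X a C0 delta g x)).
have p0 : 0 <= p by apply: fine_ge0; exact: measure_ge0.
have pM : p <= (M' * M')%:R * Fbar X y ^+ 2.
  by rewrite -lee_fin /p fineK ?fin_num_measure //; exact: (@mevent _ _ _ P X a C0 delta g x).
have MM0 : 0 <= (M' * M')%:R :> R by [].
have MMz : (M' * M')%:R <= (c1 * s) ^+ 2 :> R.
  have hm : M'%:R <= z :> R by rewrite /M' truncn_le.
  have hm0 : 0 <= M'%:R :> R by [].
  rewrite natrM -zE expr2; nra.
have yT1 : T1 < y by lra.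
have sT1' : T1 < s by lra.
have [Fy1 Fy2] := HT1 y yT1.
have [Fs1 Fs2] := HT1 s sT1'.
have Fy0 : 0 <= Fbar X y by apply: fine_ge0; exact: measure_ge0.
have Fs0 : 0 <= Fbar X s by apply: fine_ge0; exact: measure_ge0.
rewrite ger0_norm // ger0_norm //.
apply: (@final_alg _ p _ _ (Fbar X s) c1 s (y^-1) (s^-1) w W k eps p0 pM MM0 MMz Fy0) => //.
- by move: Fy2; rewrite /E0 -exprVn mulrA.
- by rewrite mulfV ?gt_eqF.
- by rewrite invr_ge0 ltW.
- have : y^-1 <= (s / 2)^-1 by rewrite lef_pV2 ?posrE //; lra.
  by rewrite invf_div.
- exact: ltW (expR_gt0 _).
- exact: ltW (expR_gt0 _).
- by move: Fs1; rewrite /E0 -exprVn.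
- by rewrite /k; field; apply: lt0r_neq0.
Qed.
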